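(* Let $X$ be a fixed finite set, let $p \in (0,1)$ and $\delta_B \in (0,1)$. For a finite set $Y$, let $\mathcal M_Y(Y) = |X \cap Y_{\mathrm{sub}}|$, where $Y_{\mathrm{sub}} \subseteq Y$ includes each element of $Y$ independently with probability $p$. Set $$L = \frac{\left(\sqrt{\tfrac12\log\tfrac{2}{\delta_B}} + \sqrt{\tfrac12\log\tfrac{2}{\delta_B} + 16(1-p)\log\tfrac{4}{\delta_B}}\right)^2}{16(1-p)^2}.$$ If $|I| > L$, where $I = X\cap Y$, then $\mathcal M_Y$ provides $(\epsilon_B, \delta_B)$-differential privacy for $Y$, i.e. for every $Y'$ neighboring $Y$ and every set $W$ of outputs, $\Pr[\mathcal M_Y(Y)\in W] \le e^{\epsilon_B}\Pr[\mathcal M_Y(Y')\in W] + \delta_B$, where $$\epsilon_B = \frac{2\sqrt{t\log\frac{4}{\delta_B}} + 1}{t - \sqrt{t\log\frac{4}{\delta_B}}}, \qquad t = (1-p)|I| - \sqrt{\frac{|I|}{8}\log\frac{2}{\delta_B}}.$$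
   Context: $\log$ is the natural logarithm. Neighboring sets are in the bounded sense: $Y'$ is obtained from $Y$ by replacing exactly one element by another element (so $|Y'|=|Y|$); the set $X$ is held fixed. *)

(* Defs.v *)
From HB Require Import structures.
From mathcomp Require Import all_boot all_order all_algebra.
From mathcomp Require Import all_classical all_reals.
From mathcomp Require Import all_analysis.
Set Implicit Arguments. Unset Strict Implicit. Unset Printing Implicit Defensive.
Import Order.TTheory GRing.Theory Num.Theory.
Local Open Scope ring_scope.

Section Defs.
Variables (R : realType) (T : finType).

(* Pr[ M_Y(Y) \in W ] where M_Y(Y) = |X \cap Y_sub| and Y_sub is the random
   subset of Y containing each element of Y independently with probability p:
   sum over all subsets S of Y of Pr[Y_sub = S] * [ |X \cap S| \in W ]. *)
Definition mech_prob (p : R) (X Y : {set T}) (W : pred nat) : R :=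
  \sum_(S : {set T} | S \subset Y)
     p ^+ #|S| * (1 - p) ^+ (#|Y| - #|S|) * (W #|X :&: S|)%:R.

(* Bounded neighbouring: Y' is Y with exactly one element y replaced by
   another element y' (not already in Y), so |Y'| = |Y|. *)
Definition neighbor (Y Y' : {set T}) : Prop :=
  exists y y', [/\ y \in Y, y' \notin Y & Y' = y' |: (Y :\ y)].
End Defs.

Definition bound_L (R : realType) (p dB : R) : R :=
  (Num.sqrt (2^-1 * ln (2 / dB)) +
   Num.sqrt (2^-1 * ln (2 / dB) + 16 * (1 - p) * ln (4 / dB))) ^+ 2
  / (16 * (1 - p) ^+ 2).

Definition t_param (R : realType) (p dB : R) (nI : nat) : R :=
  (1 - p) * nI%:R - Num.sqrt (nI%:R / 8 * ln (2 / dB)).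

Definition eps_B (R : realType) (p dB : R) (nI : nat) : R :=
  let t := t_param p dB nI in
  (2 * Num.sqrt (t * ln (4 / dB)) + 1) / (t - Num.sqrt (t * ln (4 / dB))).

(* Main.v *)
Require Import Defs.
From HB Require Import structures.
From mathcomp Require Import all_boot all_order all_algebra.
From mathcomp Require Import all_classical all_reals.
From mathcomp Require Import all_analysis.
From mathcomp Require Import ring lra.
Import Order.TTheory GRing.Theory Num.Theory.
Local Open Scope ring_scope.
Set Implicit Arguments. Unset Strict Implicit. Unset Printing Implicit Defensive.



Section Comb.
Variables (R : realType) (T : finType).

Lemma sum_subsetU1 (y : T) (Y0 : {set T}) (h : {set T} -> R) :
  y \notin Y0 ->
  \sum_(S : {set T} | S \subset y |: Y0) h S =
  \sum_(S : {set T} | S \subset Y0) h S + \sum_(S : {set T} | S \subset Y0) h (y |: S).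
Proof.
move=> yY0.
rewrite (bigID (fun S : {set T} => y \in S)) /= addrC; congr (_ + _).
  apply: eq_bigl => S; apply/idP/idP.
    case/andP=> sS yS; apply/fintype.subsetP => x xS.
    have := fintype.subsetP sS x xS; rewrite in_setU1; case/orP => // /eqP xy.
    by rewrite -xy xS in yS.
  move=> sS; rewrite (fintype.subset_trans sS) ?finset.subsetUr //.
  by apply/negP => yS; rewrite (fintype.subsetP sS y yS) in yY0.
rewrite (reindex_onto (fun S => y |: S) (fun S => S :\ y)) /=; last first.
  by move=> S /andP[_ yS]; rewrite finset.setD1K.
apply: eq_bigl => S; apply/idP/idP.
  case/andP=> /andP[sS _] /eqP eS; apply/fintype.subsetP => x xS.
  have := fintype.subsetP sS x; rewrite !in_setU1 xS orbT => /(_ isT); case/orP => // /eqP xy.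
  by move: xS; rewrite -eS xy !inE eqxx.

move=> sS; rewrite setU11 andbT finset.setUS //=.
apply/eqP; rewrite finset.setU1K //.
by apply/negP => yS; rewrite (fintype.subsetP sS y yS) in yY0.
Qed.

Lemma cardIU1 (X Z : {set T}) (y : T) : y \notin Z ->
  #|X :&: (y |: Z)| = ((y \in X) + #|X :&: Z|)%N.
Proof.
move=> yZ; rewrite finset.setIUr; case: (boolP (y \in X)) => yX.
  have -> : X :&: [set y] = [set y] by apply/finset.setIidPr; rewrite finset.sub1set.
  rewrite cardsU1 inE (negbTE yZ) andbF //.
have -> : X :&: [set y] = finset.set0.
  by apply/finset.setP=> x; rewrite !inE; apply/negP=> /andP[xX /eqP xy]; rewrite -xy xX in yX.
by rewrite finset.set0U.
Qed.
End Comb.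



Section Binom.
Variables (R : realType).
Definition bpmf (p : R) n k := 'C(n,k)%:R * p ^+ k * (1 - p) ^+ (n - k).
Definition bsum (p : R) n (F : nat -> R) := \sum_(k < n.+1) bpmf p n k * F k.

Lemma bsumS p n F : bsum p n.+1 F = (1-p) * bsum p n F + p * bsum p n (fun k => F k.+1).
Proof.
rewrite /bsum /bpmf big_ord_recl /=.
under eq_bigr do rewrite binS natrD !mulrDl.
rewrite big_split /= addrA; congr (_ + _).
  rewrite big_ord_recr /= (bin_small (ltnSn n)) !mul0r addr0.
  rewrite [in RHS]big_ord_recl mulrDr mulr_sumr; congr (_ + _).
    by rewrite !bin0 !subn0 exprS; ring.
  apply: eq_bigr => i _; rewrite /bump /= !add1n subSS.
  have hi : (i < n)%N := ltn_ord i.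
  rewrite -(subnSK hi) (exprS (1 - p)) /bump /= add1n; ring.
rewrite mulr_sumr; apply: eq_bigr => i _.
by rewrite /bump /= !add1n subSS exprS; ring.
Qed.
End Binom.

Section G.
Variables (R : realType) (T : finType) (p : R).

Lemma G_binom (X : {set T}) n : forall (Y : {set T}) (F : nat -> R), #|Y| = n ->
  \sum_(S : {set T} | S \subset Y) p ^+ #|S| * (1 - p) ^+ (#|Y| - #|S|) * F #|X :&: S|
  = bsum p #|X :&: Y| F.
Proof.
elim: n => [|n IH] Y F cY.
  move/eqP: cY; rewrite finset.cards_eq0 => /eqP ->.
  rewrite (big_pred1 finset.set0); last first.
    by move=> S; rewrite finset.subset0.
  rewrite /bsum !finset.setI0 !finset.cards0 big_ord_recl big_ord0 /bpmf /= bin0 !expr0 !mul1r addr0 //.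
have : (0 < #|Y|)%N by rewrite cY.
case/card_gt0P => y yY.
set Y0 := Y :\ y.
have yY0 : y \notin Y0 by rewrite !inE eqxx.
have eY : Y = y |: Y0 by rewrite finset.setD1K.
have cY0 : #|Y0| = n by move: cY; rewrite eY finset.cardsU1 yY0 add1n => -[].
rewrite eY sum_subsetU1 //.
rewrite finset.cardsU1 yY0 add1n.
transitivity ((1 - p) * \sum_(S : {set T} | S \subset Y0) p ^+ #|S| * (1 - p) ^+ (#|Y0| - #|S|) * F #|X :&: S|
  + p * \sum_(S : {set T} | S \subset Y0) p ^+ #|S| * (1 - p) ^+ (#|Y0| - #|S|) * F ((y \in X) + #|X :&: S|)%N).
  rewrite !mulr_sumr; congr (_ + _); apply: eq_bigr => S sS.
    rewrite subSn ?fintype.subset_leq_card // exprS; ring.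
  have yS : y \notin S by apply/negP => yS; rewrite (fintype.subsetP sS y yS) in yY0.
  rewrite cardIU1 // finset.cardsU1 yS add1n subSS exprS; ring.
rewrite IH // (IH Y0 (fun k => F ((y \in X) + k)%N)) // cardIU1 //.
case: (y \in X) => /=.
  by rewrite add1n bsumS.
by rewrite add0n -mulrDl subrK mul1r.
Qed.

Lemma mech_binom (X Y : {set T}) W :
  mech_prob p X Y W = bsum p #|X :&: Y| (fun k => (W k)%:R).
Proof. by rewrite /mech_prob (G_binom X (Y:=Y) (fun k => (W k)%:R) (erefl _)). Qed.
End G.



Section Chernoff.
Variables (R : realType) (p : R).
Hypothesis p01 : 0 <= p <= 1.

Lemma bpmf_ge0 n k : 0 <= bpmf p n k.
Proof.
case/andP: p01 => p0 p1.
by rewrite /bpmf !mulr_ge0 ?exprn_ge0 ?ler0n // subr_ge0.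
Qed.

Lemma mgf n l : \sum_(k < n.+1) bpmf p n k * expR (l * (n - k)%:R)
  = (p + (1 - p) * expR l) ^+ n.
Proof.
rewrite addrC exprDn; apply: eq_bigr => k _.
rewrite /bpmf expRM_natr exprMn; ring.
Qed.

Lemma mgf_le n l : (p + (1 - p) * expR l) ^+ n <= expR (n%:R * (1 - p) * (expR l - 1)).
Proof.
case/andP: p01 => p0 p1.
rewrite -mulrA expRM_natl; apply: lerXn2r.
- by rewrite nnegrE addr_ge0 // mulr_ge0 ?subr_ge0 ?expR_ge0.
- by rewrite nnegrE expR_ge0.
have := expR_ge1Dx ((1 - p) * (expR l - 1)).
by apply: le_trans; rewrite le_eqVlt; apply/orP; left; apply/eqP; ring.
Qed.

Lemma chernoff_bin n (bad : nat -> bool) l a :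
  (forall k, (k <= n)%N -> bad k -> a < l * (n - k)%:R) ->
  \sum_(k < n.+1) bpmf p n k * (bad k)%:R <=
  expR (- a) * expR (n%:R * (1 - p) * (expR l - 1)).
Proof.
move=> H.
apply: le_trans (_ : \sum_(k < n.+1) bpmf p n k * expR (l * (n - k)%:R - a) <= _).
  apply: ler_sum => k _; apply: ler_wpM2l; first exact: bpmf_ge0.
  case: (boolP (bad k)) => bk /=; last by rewrite expR_ge0.
  have := H k (ltn_ord k) bk => hk.
  by apply/ltW; rewrite expR_gt1 subr_gt0.
under eq_bigr do rewrite expRD mulrA.
rewrite -big_distrl /= mgf mulrC; apply: ler_wpM2l; first exact: expR_ge0.
exact: mgf_le.
Qed.
End Chernoff.



Section Ratio.
Variables (R : realType) (p : R).
Hypothesis p01 : 0 < p < 1.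

Lemma bpmf_id n k : (k <= n.+1)%N ->
  (n.+1 - k)%:R * bpmf p n.+1 k = n.+1%:R * (1 - p) * bpmf p n k.
Proof.
move=> kn; rewrite /bpmf.
have := mul_bin_down n.+1 k => /= /(congr1 (fun x => x%:R : R)); rewrite !natrM => E.
case: (leqP k n) => kn'.
  have -> : (1 - p) ^+ (n.+1 - k) = (1 - p) * (1 - p) ^+ (n - k) by rewrite subSn // exprS.
  transitivity ((n.+1 - k)%:R * 'C(n.+1, k)%:R * p ^+ k * ((1 - p) * (1 - p) ^+ (n - k))).
    by ring.
  by rewrite -E; ring.
have -> : k = n.+1 by apply/eqP; rewrite eqn_leq kn kn'.
by rewrite subnn (bin_small (ltnSn n)) !mul0r mulr0.
Qed.

Lemma bpmf_gt0_of (e a b : R) : expR e * a < b -> 0 <= a -> 0 < b.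
Proof. by move=> h a0; apply: le_lt_trans h; rewrite mulr_ge0 // expR_ge0. Qed.

Lemma badA n k e : (k <= n.+1)%N -> expR e * bpmf p n k < bpmf p n.+1 k ->
  (n.+1 - k)%:R < n.+1%:R * (1 - p) * expR (- e).
Proof.
case/andP: p01 => p0 p1.
have p01' : 0 <= p <= 1 by rewrite !ltW.
move=> kn bad.
have P0 : 0 < bpmf p n.+1 k := (bpmf_gt0_of bad (bpmf_ge0 p01' _ _)).
rewrite -(ltr_pM2r P0) bpmf_id //.
have q0 : 0 < n.+1%:R * (1 - p) by rewrite mulr_gt0 // ?ltr0Sn // subr_gt0.
rewrite -[X in _ < X]mulrA ltr_pM2l //.
rewrite -(ltr_pM2l (expR_gt0 e)) mulrA -expRD subrr expR0 mul1r //.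
Qed.

Lemma badB n k e : (k <= n)%N -> expR e * bpmf p n.+1 k < bpmf p n k ->
  n.+1%:R * (1 - p) * expR e - 1 < (n - k)%:R.
Proof.
case/andP: p01 => p0 p1.
have p01' : 0 <= p <= 1 by rewrite !ltW.
move=> kn bad.
have P0 : 0 < bpmf p n k := (bpmf_gt0_of bad (bpmf_ge0 p01' _ _)).
suff h : n.+1%:R * (1 - p) * expR e < (n.+1 - k)%:R.
  by move: h; rewrite subSn // -addn1 natrD; lra.
rewrite -(ltr_pM2r P0).
have A0 : 0 < (n.+1 - k)%:R :> R by rewrite ltr0n subn_gt0 ltnS.
have ID := bpmf_id (leqW kn).
have -> : n.+1%:R * (1 - p) * expR e * bpmf p n k =
  (n.+1 - k)%:R * (expR e * bpmf p n.+1 k).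
  by rewrite [RHS]mulrCA ID; ring.
by rewrite ltr_pM2l.
Qed.

End Ratio.



Section Real.
Variable R : realType.

Lemma e_le4 : expR 1 <= 4 :> R.
Proof.
have h := expR_ge1Dx (- (1/2) : R).
have e2 : expR (1/2) * expR (- (1/2)) = 1 :> R by rewrite expRxMexpNx_1.
have y0 : 0 < expR (1/2) :> R := expR_gt0 _.
have -> : (1 : R) = 1/2 + 1/2 by field.
rewrite expRD.
nra.
Qed.

Lemma fA (e t s mu b : R) : 0 <= s -> s < t -> t <= mu -> s ^+ 2 = t * b ->
  e * (t - s) = 2 * s + 1 -> b <= mu * (1 - (1 + e) * expR (- e)).
Proof.
move=> s0 st tm sb es.
have e0 : 0 <= e by nra.
set th := expR (- e).
set y := expR (e / 2).
have hy : 1 + e / 2 <= y := expR_ge1Dx _.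
have thy : th * (y * y) = 1.
  rewrite /th /y -!expRD.
  have -> : - e + (e / 2 + e / 2) = 0 by field.
  by rewrite expR0.
have th0 : 0 < th := expR_gt0 _.
have h1 : (e + 2) ^+ 2 <= 4 * (y * y).
  have : 0 <= e + 2 by lra.
  nra.
have h2 : (e + 2) ^+ 2 * th <= 4.
  have := ler_wpM2r (ltW th0) h1.
  have -> : 4 * (y * y) * th = 4 * (th * (y * y)) by ring.
  rewrite thy mulr1.
  done.
have h3 : (1 - (1 + e) * th) * (e + 2) ^+ 2 >= e ^+ 2 by nra.
have f0 : 0 <= 1 - (1 + e) * th.
  have : 0 < (e + 2) ^+ 2 by nra.
  nra.
have h4 : t * e >= s * (e + 2) by nra.
have t0 : 0 < t by lra.
set f := 1 - (1 + e) * th in h3 f0 *.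
suff : b <= t * f by move=> h; apply: (le_trans h); nra.
have h5 : t * t * (e ^+ 2) >= s ^+ 2 * (e + 2) ^+ 2.
  have : 0 <= s * (e + 2) by nra.
  nra.
have h6 : t * (t * f) * (e + 2) ^+ 2 >= t * b * (e + 2) ^+ 2 by nra.
have : 0 < t * (e + 2) ^+ 2 by nra.
nra.
Qed.

Lemma gB (e : R) : 0 <= e -> e ^+ 2 / 4 <= 1 + expR e * (e - 1).
Proof.
move=> e0.
case: (leP 1 e) => e1.
  have := expR_ge1Dx e; nra.
set y := expR (e / 2).
have hy : 1 - e / 2 <= expR (- (e / 2)) := expR_ge1Dx _.
have yy : expR e = y * y by rewrite /y -expRD; congr expR; field.
have yN : y * expR (- (e / 2)) = 1 by rewrite /y expRxMexpNx_1.
have y0 : 0 < y := expR_gt0 _.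
have h : y * (1 - e / 2) <= 1 by nra.
rewrite yy.
have h' : y * y * (1 - e / 2) ^+ 2 <= 1.
  have : 0 <= y * (1 - e / 2) by nra.
  nra.
have h'' : 1 - e <= (1 - e / 2) ^+ 2 * (1 - e ^+ 2 / 4) by nra.
have : 0 <= 1 - e by lra.
nra.
Qed.

Lemma fB (e t s mu b q : R) : 1 <= b -> 0 <= s -> s < t -> t <= mu -> s ^+ 2 = t * b ->
  e * (t - s) = 2 * s + 1 -> 0 <= q ->
  mu * (expR e - 1) - e * (mu * expR e + q * expR e - 1) <= 1 - b.
Proof.
move=> b1 s0 st tm sb es q0.
have e0 : 0 <= e by nra.
have g := gB e0.
have E0 := expR_gt0 e.
have t0 : 0 < t by lra.
have eq0 : 0 <= e * q * expR e by rewrite !mulr_ge0 // ltW.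
have g0 : 0 <= 1 + expR e * (e - 1) by nra.
suff : t * (e ^+ 2 / 4) - e >= b - 1 by nra.
have s1 : 1 <= s.
  have : t <= s ^+ 2 by rewrite sb; nra.
  nra.
set D := t - s.
have D0 : 0 < D by rewrite /D; lra.
have Dle : D <= s ^+ 2 - s by rewrite /D; nra.
have P0 : 0 <= s ^+ 2 * (2 * s + 1) ^+ 2 + 2 * s * (2 * s + 1) * (2 * s - 1) * D - 3 * D ^+ 2 + 4 * D ^+ 3.
  have : 6 <= 2 * s * (2 * s + 1) * (2 * s - 1) by nra.
  nra.
have eD : e * D = 2 * s + 1 by rewrite /D.
have key : 4 * t * D ^+ 2 * (t * (e ^+ 2 / 4) - e - b + 1) =
  s ^+ 2 * (2 * s + 1) ^+ 2 + 2 * s * (2 * s + 1) * (2 * s - 1) * D - 3 * D ^+ 2 + 4 * D ^+ 3.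
  have -> : 4 * t * D ^+ 2 * (t * (e ^+ 2 / 4) - e - b + 1) = t ^+ 2 * (e * D) ^+ 2 - 4 * t * D * (e * D) - 4 * (t * b) * D ^+ 2 + 4 * t * D ^+ 2.
    by field.
  rewrite eD -sb /D; ring.
have K0 : 0 < 4 * t * D ^+ 2 by rewrite !mulr_gt0 // exprn_gt0.
rewrite -key in P0.
have : 0 <= t * (e ^+ 2 / 4) - e - b + 1 by rewrite -(pmulr_rge0 _ K0).
lra.
Qed.
End Real.



Section Thr.
Variable R : realType.

Lemma b_ge1 (dB : R) : 0 < dB < 1 -> 1 <= ln (4 / dB).
Proof.
case/andP=> d0 d1.
have h4 : 4 <= 4 / dB.
  by rewrite ler_pdivlMr //; nra.
rewrite -[X in X <= _](expRK 1) ler_ln ?posrE ?expR_gt0 ?divr_gt0 //.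
exact: le_trans (e_le4 R) h4.
Qed.

Lemma thr (p dB : R) n : 0 < p < 1 -> 0 < dB < 1 -> bound_L p dB < n%:R ->
  ln (4 / dB) < t_param p dB n.
Proof.
case/andP=> p0 p1 /andP[d0 d1] hL.
set b := ln (4 / dB).
have b1 : 1 <= b by apply: b_ge1; rewrite d0 d1.
set q := 1 - p.
have q0 : 0 < q by rewrite /q subr_gt0.
have l2 : 0 <= ln (2 / dB) by apply: ln_ge0; rewrite ler_pdivlMr //; lra.
set A := 2^-1 * ln (2 / dB).
have A0 : 0 <= A by rewrite /A mulr_ge0 // invr_ge0.
set w := Num.sqrt A.
have w0 : 0 <= w := sqrtr_ge0 _.
have w2 : w ^+ 2 = A by rewrite sqr_sqrtr.
set z := Num.sqrt (A + 16 * q * b).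
have z0 : 0 <= z := sqrtr_ge0 _.
have z2 : z ^+ 2 = A + 16 * q * b by rewrite sqr_sqrtr // addr_ge0 // !mulr_ge0 // ?ltW //; lra.
have n0 : 0 <= n%:R :> R := ler0n _ _.
set u := Num.sqrt (n%:R : R).
have u0 : 0 <= u := sqrtr_ge0 _.
have u2 : u ^+ 2 = n%:R by rewrite sqr_sqrtr.
have hL' : (w + z) ^+ 2 < 16 * q ^+ 2 * n%:R.
  move: hL; rewrite /bound_L -/b -/q -/A -/w -/z ltr_pdivrMr //.
    by rewrite mulrC.
  by rewrite mulr_gt0 // exprn_gt0.
have h1 : w + z < 4 * q * u.
  have : 0 <= 4 * q * u by rewrite !mulr_ge0 // ltW.
  rewrite -u2 in hL'; nra.
have h2 : q * u ^+ 2 - u * w / 2 > b.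
  have : 0 <= z by [].
  have : z < 4 * q * u - w by lra.
  nra.
set v := Num.sqrt (n%:R / 8 * ln (2 / dB)).
have v0 : 0 <= v := sqrtr_ge0 _.
have v2 : v ^+ 2 = (u * w / 2) ^+ 2.
  rewrite sqr_sqrtr; last by rewrite mulr_ge0 // divr_ge0.
  by rewrite expr_div_n exprMn u2 w2 /A; field.
have vuw : v <= u * w / 2.
  have : 0 <= u * w / 2 by rewrite divr_ge0 // mulr_ge0.
  move=> c0; rewrite -(@ler_pXn2r _ 2) ?nnegrE // v2 //.
rewrite /t_param -/v -/q -u2.
lra.
Qed.
End Thr.



Section Core.
Variable R : realType.

Lemma split_bad (p : R) n m e (F : nat -> R) : 0 <= p <= 1 -> (forall k, 0 <= F k <= 1) ->
  bsum p n F <= expR e * \sum_(k < n.+1) bpmf p m k * F k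
    + \sum_(k < n.+1) bpmf p n k * ((expR e * bpmf p m k < bpmf p n k)%R)%:R.
Proof.
move=> p01 F01.
rewrite /bsum mulr_sumr -big_split /=; apply: ler_sum => k _.
have := F01 k => /andP[F0 F1].
have b0 := bpmf_ge0 p01 n k.
have b0' := bpmf_ge0 p01 m k.
have E0 := expR_gt0 e.
case: ltP => /= h.
  have : 0 <= expR e * (bpmf p m k * F k) by apply: mulr_ge0; [exact: expR_ge0 | exact: mulr_ge0].
  nra.
nra.
Qed.

Lemma bsum_ge0 (p : R) n (F : nat -> R) : 0 <= p <= 1 -> (forall k, 0 <= F k <= 1) ->
  0 <= bsum p n F.
Proof.
move=> p01 F01; apply: sumr_ge0 => k _; apply: mulr_ge0; first exact: bpmf_ge0.
by case/andP: (F01 k).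
Qed.

Lemma dp_core (p dB : R) n m (F : nat -> R) : 0 < p < 1 -> 0 < dB < 1 ->
  (forall k, 0 <= F k <= 1) -> bound_L p dB < n%:R ->
  (m = n \/ m.+1 = n \/ m = n.+1) ->
  bsum p n F <= expR (eps_B p dB n) * bsum p m F + dB.
Proof.
move=> hp hd F01 hL hm.
have p01 : 0 <= p <= 1 by case/andP: hp => p0 p1; rewrite !ltW.
case/andP: (hp) => p0 p1; case/andP: (hd) => d0 d1.
have tb := thr hp hd hL.
set b := ln (4 / dB) in tb.
have b1 : 1 <= b by apply: b_ge1.
set t := t_param p dB n in tb.
set s := Num.sqrt (t * b).
have s0 : 0 <= s := sqrtr_ge0 _.
have s2 : s ^+ 2 = t * b by rewrite sqr_sqrtr // mulr_ge0 //; lra.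
have st : s < t by nra.
have tmu : t <= n%:R * (1 - p).
  by rewrite /t /t_param mulrC lerBlDr lerDl sqrtr_ge0.
set e := eps_B p dB n.
have ee : e = (2 * s + 1) / (t - s) by [].
have es : e * (t - s) = 2 * s + 1 by rewrite ee; field; rewrite subr_eq0 gt_eqF.
have e0 : 0 < e by rewrite ee divr_gt0 //; lra.
have Eb : expR (- b) = dB / 4.
  by rewrite expRN lnK ?posrE ?divr_gt0 // invf_div.
have E0 := expR_gt0 e.
case: hm => [->|[hm|hm]].
- have := bsum_ge0 n p01 F01.
  have : 1 <= expR e by rewrite -expR0 ler_expR ltW.
  nra.
-
  subst n.
  apply: le_trans (split_bad m.+1 m e p01 F01) _.
  have -> : \sum_(k < m.+2) bpmf p m k * F k = bsum p m F.
    by rewrite big_ord_recr /= /bpmf (bin_small (ltnSn m)) !mul0r addr0.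
  rewrite lerD2l.
  set th := expR (- e).
  have H : forall k, (k <= m.+1)%N -> expR e * bpmf p m k < bpmf p m.+1 k ->
      - e * (m.+1%:R * (1 - p) * th) < - e * (m.+1 - k)%:R.
    by move=> k km bad; rewrite !mulNr ltrN2 ltr_pM2l // (badA hp km bad).
  have h := @chernoff_bin R p p01 m.+1 (fun k => (expR e * bpmf p m k < bpmf p m.+1 k)%R) (- e) (- e * (m.+1%:R * (1 - p) * th)) H.
  apply: le_trans h _.
  rewrite -expRD.
  have fa := fA s0 st tmu s2 es.
  apply: le_trans (_ : expR (- b) <= _); last by rewrite Eb; lra.
  rewrite ler_expR /th; nra.
-
  subst m.
  apply: le_trans (split_bad n n.+1 e p01 F01) _.
  rewrite lerD //.
    apply: ler_wpM2l; first exact: ltW.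
    rewrite /bsum [X in _ <= X]big_ord_recr /= lerDl.
    by rewrite mulr_ge0 ?bpmf_ge0 //; case/andP: (F01 n.+1).
  set E := expR e.
  have H : forall k, (k <= n)%N -> expR e * bpmf p n.+1 k < bpmf p n k ->
      e * (n.+1%:R * (1 - p) * E - 1) < e * (n - k)%:R.
    by move=> k km bad; rewrite ltr_pM2l // (badB hp km bad).
  have h := @chernoff_bin R p p01 n (fun k => (expR e * bpmf p n.+1 k < bpmf p n k)%R) e (e * (n.+1%:R * (1 - p) * E - 1)) H.
  apply: le_trans h _.
  rewrite -expRD.
  have q0 : 0 <= 1 - p by lra.
  have fb := fB b1 s0 st tmu s2 es q0.
  apply: le_trans (_ : expR (1 + - b) <= _).
    rewrite ler_expR; move: fb; rewrite -/E -natr1; nra.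
  rewrite expRD Eb.
  have := e_le4 R.
  have : 0 < dB / 4 by rewrite divr_gt0.
  nra.
Qed.
End Core.

Unset Implicit Arguments.

Theorem theorem2 (R : realType) (T : finType) (X Y : {set T}) (p dB : R) :
  0 < p < 1 -> 0 < dB < 1 ->
  bound_L p dB < #|X :&: Y|%:R ->
  forall (Y' : {set T}) (W : pred nat), neighbor Y Y' ->
    mech_prob p X Y W <=
      expR (eps_B p dB #|X :&: Y|) * mech_prob p X Y' W + dB.
Proof.
move=> hp hd hL Y' W [y [y' [yY y'Y ->]]].
rewrite !mech_binom.
apply: dp_core => //.
  by move=> k; case: (W k); rewrite /= ?ler01 ?lexx.
set Y0 := Y :\ y.
have yY0 : y \notin Y0 by rewrite !inE eqxx.
have y'Y0 : y' \notin Y0 by rewrite !inE negb_and y'Y orbT.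
have eY : Y = y |: Y0 by rewrite finset.setD1K.
rewrite [in #|X :&: Y|]eY !cardIU1 //.
case: (y \in X); case: (y' \in X) => /=; rewrite ?add0n ?add1n; tauto.
Qed.
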